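(* Let $M_1,\dots,M_k$ be terms in normal form and let $C$ be a $k$-hole $E$-context. If $\Gamma,\downarrow C[M_1,\dots,M_k]\vdash M$ has a cut-free derivation in $\mathcal S$, then so does $\Gamma,M_1,\dots,M_k\vdash M$.
   Context: Fix names, variables and constructors $\mathsf{pub}$ (unary), $\mathsf{sign},\mathsf{blind},\langle\cdot,\cdot\rangle,\{\cdot\}_\cdot$ (binary). $E$ is the union of AC-convergent equational theories $E_1,\dots,E_n$ with pairwise disjoint signatures, disjoint from the constructors, each with at most one associative-commutative (AC) binary symbol $\oplus_i$; $E$ is presented by a rewrite system $R_E$ terminating and confluent modulo AC; $\Sigma_E$ is its signature. Terms are ground terms over names, the constructors and $\Sigma_E$; $\downarrow N$ is the $R_E$-normal form of $N$ modulo AC. $\equiv$ is equality modulo AC of all $\oplus_i$; $\approx_E$ equality modulo $E$. Guarded term: a name, a variable, or headed by a constructor. $E$-context: term with holes built only from symbols of $\Sigma_E$; $C[M_1,\dots,M_k]$ places $M_i$ in the $i$-th hole. Sequents $\Gamma\vdash M$ have all terms in normal form; $\Gamma,M$ means $\Gamma\cup\{M\}$. A derivation is cut-free if it has no instance of (cut). System $\mathcal S$: (id) $\Gamma\vdash M$ with no premise if $M\approx_E C[M_1,\dots,M_k]$ for an $E$-context $C$ and $M_i\in\Gamma$; (cut) from $\Gamma\vdash M$, $\Gamma,M\vdash T$ infer $\Gamma\vdash T$; ($p_L$) from $\Gamma,\langle M,N\rangle,M,N\vdash T$ infer $\Gamma,\langle M,N\rangle\vdash T$; ($p_R$) from $\Gamma\vdash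 M,\Gamma\vdash N$ infer $\Gamma\vdash\langle M,N\rangle$; ($e_L$) from $\Gamma,\{M\}_K\vdash K$ and $\Gamma,\{M\}_K,M,K\vdash N$ infer $\Gamma,\{M\}_K\vdash N$; ($e_R$) from $\Gamma\vdash M,\Gamma\vdash K$ infer $\Gamma\vdash\{M\}_K$; ($\mathsf{sign}_L$) from $\Gamma,\mathsf{sign}(M,K),\mathsf{pub}(L),M\vdash N$ infer $\Gamma,\mathsf{sign}(M,K),\mathsf{pub}(L)\vdash N$ if $K\equiv L$; ($\mathsf{sign}_R$) from $\Gamma\vdash M,\Gamma\vdash K$ infer $\Gamma\vdash\mathsf{sign}(M,K)$; ($\mathsf{blind}_{L1}$) from $\Gamma,\mathsf{blind}(M,K)\vdash K$ and $\Gamma,\mathsf{blind}(M,K),M,K\vdash N$ infer $\Gamma,\mathsf{blind}(M,K)\vdash N$; ($\mathsf{blind}_R$) from $\Gamma\vdash M,\Gamma\vdash K$ infer $\Gamma\vdash\mathsf{blind}(M,K)$; ($\mathsf{blind}_{L2}$) from $\Gamma,\mathsf{sign}(\mathsf{blind}(M,R),K)\vdash R$ and $\Gamma,\mathsf{sign}(\mathsf{blind}(M,R),K),\mathsf{sign}(M,K),R\vdash N$ infer $\Gamma,\mathsf{sign}(\mathsf{blind}(M,R),K)\vdash N$; ($gs$) from $\Gamma\vdash A$, $\Gamma,A\vdash M$ infer $\Gamma\vdash M$ if $A$ is a guarded subterm of a term in $\Gamma\cup\{M\}$. *)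

(* Defs.v *)
From Stdlib Require Import List Relations.
Import ListNotations.
Set Implicit Arguments.

(** Terms.  [F] is the signature Sigma_E of the equational theory; Var is
    used for rewrite rules (open terms); sequents only contain ground terms. *)
Inductive term (F : Type) : Type :=
| Var   (x : nat)
| Name  (a : nat)
| Pub   (t : term F)
| Sign  (m k : term F)
| Blind (m k : term F)
| Pair  (m n : term F)
| Enc   (m k : term F)
| Fn    (f : F) (ts : list (term F)).

Arguments Var {F} x.
Arguments Name {F} a.

Record eqth := {
  sym   : Type;
  arity : sym -> nat;
  isac  : sym -> bool;
  nth   : nat;
  th    : sym -> nat;                 (* f belongs to the signature of E_(th f) *)
  rules : term sym -> term sym -> Prop
}.

Section Theory.
Variable E : eqth.
Notation F := (sym E).
Notation term := (term F).

Inductive subterm : term -> term -> Prop :=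
| st_refl t : subterm t t
| st_pub s t : subterm s t -> subterm s (Pub t)
| st_sign1 s t u : subterm s t -> subterm s (Sign t u)
| st_sign2 s t u : subterm s u -> subterm s (Sign t u)
| st_blind1 s t u : subterm s t -> subterm s (Blind t u)
| st_blind2 s t u : subterm s u -> subterm s (Blind t u)
| st_pair1 s t u : subterm s t -> subterm s (Pair t u)
| st_pair2 s t u : subterm s u -> subterm s (Pair t u)
| st_enc1 s t u : subterm s t -> subterm s (Enc t u)
| st_enc2 s t u : subterm s u -> subterm s (Enc t u)
| st_fn s t f ts : In t ts -> subterm s t -> subterm s (Fn f ts).

Definition wf (t : term) : Prop :=
  forall s, subterm s t ->
    match s with Fn f ts => length ts = arity E f | _ => True end.

Definition ground (t : term) : Prop := forall x, ~ subterm (Var x) t.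

Definition guarded (t : term) : Prop :=
  match t with Fn _ _ => False | _ => True end.

Definition pure (i : nat) (t : term) : Prop :=
  forall s, subterm s t ->
    match s with Var _ => True | Fn f _ => th E f = i | _ => False end.

Fixpoint subst (s : nat -> term) (t : term) : term :=
  match t with
  | Var x => s x
  | Name a => Name a
  | Pub u => Pub (subst s u)
  | Sign u v => Sign (subst s u) (subst s v)
  | Blind u v => Blind (subst s u) (subst s v)
  | Pair u v => Pair (subst s u) (subst s v)
  | Enc u v => Enc (subst s u) (subst s v)
  | Fn f ts => Fn f (map (subst s) ts)
  end.

Inductive cc (R : term -> term -> Prop) : term -> term -> Prop :=
| cc_base s t : R s t -> cc R s t
| cc_pub s t : cc R s t -> cc R (Pub s) (Pub t)
| cc_sign1 s t u : cc R s t -> cc R (Sign s u) (Sign t u)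
| cc_sign2 s t u : cc R s t -> cc R (Sign u s) (Sign u t)
| cc_blind1 s t u : cc R s t -> cc R (Blind s u) (Blind t u)
| cc_blind2 s t u : cc R s t -> cc R (Blind u s) (Blind u t)
| cc_pair1 s t u : cc R s t -> cc R (Pair s u) (Pair t u)
| cc_pair2 s t u : cc R s t -> cc R (Pair u s) (Pair u t)
| cc_enc1 s t u : cc R s t -> cc R (Enc s u) (Enc t u)
| cc_enc2 s t u : cc R s t -> cc R (Enc u s) (Enc u t)
| cc_fn f ls rs s t : cc R s t -> cc R (Fn f (ls ++ s :: rs)) (Fn f (ls ++ t :: rs)).

Inductive ac_ax : term -> term -> Prop :=
| ac_assoc f x y z : isac E f = true ->
    ac_ax (Fn f [Fn f [x; y]; z]) (Fn f [x; Fn f [y; z]])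
| ac_comm f x y : isac E f = true -> ac_ax (Fn f [x; y]) (Fn f [y; x]).

Definition acEq : term -> term -> Prop := clos_refl_sym_trans term (cc ac_ax).

Definition rule_inst (R : term -> term -> Prop) (s t : term) : Prop :=
  exists l r sg, R l r /\ s = subst sg l /\ t = subst sg r.

Definition rstep_mod (R : term -> term -> Prop) (s t : term) : Prop :=
  exists s' t', acEq s s' /\ cc (rule_inst R) s' t' /\ acEq t' t.

Definition rstar R := clos_refl_trans term (rstep_mod R).

Definition normal_in R (t : term) : Prop := ~ exists u, rstep_mod R t u.

Definition terminating_mod R : Prop :=
  forall t, wf t -> Acc (fun u v => rstep_mod R v u) t.

Definition confluent_mod R : Prop :=
  forall s t1 t2, wf s -> rstar R s t1 -> rstar R s t2 ->
    exists u1 u2, rstar R t1 u1 /\ rstar R t2 u2 /\ acEq u1 u2.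

Definition convergent_mod R : Prop := terminating_mod R /\ confluent_mod R.

Definition rules_of (i : nat) (l r : term) : Prop := rules E l r /\ pure i l.

Definition valid_theory : Prop :=
  (forall f, th E f < nth E) /\
  (forall f, isac E f = true -> arity E f = 2) /\
  (forall f g, isac E f = true -> isac E g = true -> th E f = th E g -> f = g) /\
  (forall l r, rules E l r ->
     (exists i, i < nth E /\ pure i l /\ pure i r) /\ wf l /\ wf r /\
     (forall x, l <> Var x) /\
     (forall x, subterm (Var x) r -> subterm (Var x) l)) /\
  (forall i, i < nth E -> convergent_mod (rules_of i)) /\
  convergent_mod (rules E).

Definition normal (t : term) : Prop := normal_in (rules E) t.

Definition is_nf (M N : term) : Prop := rstar (rules E) M N /\ normal N.

Definition eqE : term -> term -> Prop :=
  clos_refl_sym_trans term (cc (fun s t => rule_inst (rules E) s t \/ ac_ax s t)).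

Inductive ctx : Type :=
| Hole
| CFn (f : F) (cs : list ctx).

Fixpoint nholes (c : ctx) : nat :=
  match c with
  | Hole => 1
  | CFn _ cs => (fix go l := match l with [] => 0 | c' :: l' => nholes c' + go l' end) cs
  end.

Fixpoint ctx_wf (c : ctx) : Prop :=
  match c with
  | Hole => True
  | CFn f cs => length cs = arity E f /\
      (fix go l := match l with [] => True | c' :: l' => ctx_wf c' /\ go l' end) cs
  end.

Fixpoint fill_aux (c : ctx) (ms : list term) : term * list term :=
  match c with
  | Hole => match ms with [] => (Name 0, []) | m :: ms' => (m, ms') end
  | CFn f cs =>
      let p := (fix go l ms0 := match l with
                  | [] => ([], ms0)
                  | c' :: l' => let (t, ms1) := fill_aux c' ms0 in
                                let (ts, ms2) := go l' ms1 in (t :: ts, ms2)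
                  end) cs ms in
      (Fn f (fst p), snd p)
  end.

Definition fill (c : ctx) (ms : list term) : term := fst (fill_aux c ms).

Definition okt (t : term) : Prop := wf t /\ ground t /\ normal t.
Definition seq_ok (G : list term) (T : term) : Prop := Forall okt G /\ okt T.

(** The system S.  A set Gamma is represented by a list (only membership
    matters); "Gamma, X |- T" with X in Gamma is rendered by membership.
    [cut_ok = false] forbids (cut). *)
Inductive deriv (cut_ok : bool) : list term -> term -> Prop :=
| r_id G M : seq_ok G M ->
    (exists C ms, ctx_wf C /\ length ms = nholes C /\
       (forall m, In m ms -> In m G) /\ eqE M (fill C ms)) ->
    deriv cut_ok G M
| r_cut G M T : seq_ok G T -> cut_ok = true ->
    deriv cut_ok G M -> deriv cut_ok (M :: G) T -> deriv cut_ok G T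
| r_pL G M N T : seq_ok G T -> In (Pair M N) G ->
    deriv cut_ok (M :: N :: G) T -> deriv cut_ok G T
| r_pR G M N : seq_ok G (Pair M N) ->
    deriv cut_ok G M -> deriv cut_ok G N -> deriv cut_ok G (Pair M N)
| r_eL G M K N : seq_ok G N -> In (Enc M K) G ->
    deriv cut_ok G K -> deriv cut_ok (M :: K :: G) N -> deriv cut_ok G N
| r_eR G M K : seq_ok G (Enc M K) ->
    deriv cut_ok G M -> deriv cut_ok G K -> deriv cut_ok G (Enc M K)
| r_signL G M K L N : seq_ok G N -> In (Sign M K) G -> In (Pub L) G -> acEq K L ->
    deriv cut_ok (M :: G) N -> deriv cut_ok G N
| r_signR G M K : seq_ok G (Sign M K) ->
    deriv cut_ok G M -> deriv cut_ok G K -> deriv cut_ok G (Sign M K)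
| r_blindL1 G M K N : seq_ok G N -> In (Blind M K) G ->
    deriv cut_ok G K -> deriv cut_ok (M :: K :: G) N -> deriv cut_ok G N
| r_blindR G M K : seq_ok G (Blind M K) ->
    deriv cut_ok G M -> deriv cut_ok G K -> deriv cut_ok G (Blind M K)
| r_blindL2 G M R K N : seq_ok G N -> In (Sign (Blind M R) K) G ->
    deriv cut_ok G R -> deriv cut_ok (Sign M K :: R :: G) N -> deriv cut_ok G N
| r_gs G A M : seq_ok G M -> guarded A ->
    (exists t, (In t G \/ t = M) /\ subterm A t) ->
    deriv cut_ok G A -> deriv cut_ok (A :: G) M -> deriv cut_ok G M.

Definition cutfree (G : list term) (M : term) : Prop := deriv false G M.

End Theory.

(* Main.v *)
Require Import Defs.
From Stdlib Require Import List Relations Lia.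
Import ListNotations.

Section S.
Variable E : eqth.
Notation F := (sym E).
Notation term := (term F).
Notation ctx := (ctx E).

Lemma sub_trans a b c : subterm E a b -> subterm E b c -> subterm E a c.
Proof.
  intros H1 H2; revert a H1; induction H2; intros; eauto.
  - apply st_pub; auto.
  - apply st_sign1; auto.
  - apply st_sign2; auto.
  - apply st_blind1; auto.
  - apply st_blind2; auto.
  - apply st_pair1; auto.
  - apply st_pair2; auto.
  - apply st_enc1; auto.
  - apply st_enc2; auto.
  - eapply st_fn; eauto.
Qed.

Ltac cc_tac := solve [ apply cc_pub; auto | apply cc_sign1; auto | apply cc_sign2; auto
  | apply cc_blind1; auto | apply cc_blind2; auto | apply cc_pair1; auto | apply cc_pair2; auto
  | apply cc_enc1; auto | apply cc_enc2; auto | apply cc_fn; auto ].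

Definition ctxfun (h : term -> term) :=
  forall (R : term -> term -> Prop) x y, cc E R x y -> cc E R (h x) (h y).

Lemma sub_ctx u m : subterm E u m -> exists h, ctxfun h /\ m = h u.
Proof.
  induction 1; try (destruct IHsubterm as [h [Hh Heq]]; subst).
  - exists (fun x => x); split; [intros R x y H; exact H|reflexivity].
  - exists (fun x => Pub (h x)); split; [intros R x y Hc; cc_tac|reflexivity].
  - exists (fun x => Sign (h x) u); split; [intros R x y Hc; cc_tac|reflexivity].
  - exists (fun x => Sign t (h x)); split; [intros R x y Hc; cc_tac|reflexivity].
  - exists (fun x => Blind (h x) u); split; [intros R x y Hc; cc_tac|reflexivity].
  - exists (fun x => Blind t (h x)); split; [intros R x y Hc; cc_tac|reflexivity].
  - exists (fun x => Pair (h x) u); split; [intros R x y Hc; cc_tac|reflexivity].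
  - exists (fun x => Pair t (h x)); split; [intros R x y Hc; cc_tac|reflexivity].
  - exists (fun x => Enc (h x) u); split; [intros R x y Hc; cc_tac|reflexivity].
  - exists (fun x => Enc t (h x)); split; [intros R x y Hc; cc_tac|reflexivity].
  - apply in_split in H as [ls [rs ->]].
    exists (fun x => Fn f (ls ++ h x :: rs)); split; [intros R x y Hc; cc_tac|reflexivity].
Qed.

Lemma rst_map (R R' : term -> term -> Prop) (h : term -> term) :
  (forall x y, R x y -> R' (h x) (h y)) ->
  forall x y, clos_refl_sym_trans term R x y -> clos_refl_sym_trans term R' (h x) (h y).
Proof.
  intros HR x y H; induction H.
  - apply rst_step; auto.
  - apply rst_refl.
  - apply rst_sym; auto.
  - eapply rst_trans; eauto.
Qed.

Lemma cc_mono (R R' : term -> term -> Prop) : (forall x y, R x y -> R' x y) ->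
  forall x y, cc E R x y -> cc E R' x y.
Proof. intros HR x y H; induction H; [apply cc_base; auto|cc_tac..]. Qed.

Lemma ctx_acEq h x y : ctxfun h -> acEq E x y -> acEq E (h x) (h y).
Proof. intros Hh; apply rst_map; intros; apply Hh; auto. Qed.

Lemma ctx_eqE h x y : ctxfun h -> eqE E x y -> eqE E (h x) (h y).
Proof. intros Hh; apply rst_map; intros; apply Hh; auto. Qed.

Lemma acEq_eqE x y : acEq E x y -> eqE E x y.
Proof.
  apply (rst_map _ _ (fun x => x)); intros; apply (cc_mono (ac_ax E)); auto.
Qed.

Lemma acEq_refl x : acEq E x x. Proof. apply rst_refl. Qed.
Lemma acEq_sym x y : acEq E x y -> acEq E y x. Proof. apply rst_sym. Qed.
Lemma acEq_trans x y z : acEq E x y -> acEq E y z -> acEq E x z. Proof. apply rst_trans. Qed.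
Lemma eqE_sym x y : eqE E x y -> eqE E y x. Proof. apply rst_sym. Qed.
Lemma eqE_trans x y z : eqE E x y -> eqE E y z -> eqE E x z. Proof. apply rst_trans. Qed.

Lemma rstar_eqE x y : rstar E (rules E) x y -> eqE E x y.
Proof.
  induction 1.
  - destruct H as [s' [t' [H1 [H2 H3]]]].
    eapply eqE_trans; [apply acEq_eqE; eauto|].
    eapply eqE_trans; [|apply acEq_eqE; eauto].
    apply rst_step. eapply cc_mono; [|eauto]. intros; left; auto.
  - apply rst_refl.
  - eapply eqE_trans; eauto.
Qed.

Lemma normal_sub t u : normal E t -> subterm E u t -> normal E u.
Proof.
  intros Hn Hs [w [s' [t' [H1 [H2 H3]]]]].
  destruct (sub_ctx _ _ Hs) as [h [Hh ->]].
  apply Hn. exists (h t'), (h s'), (h t'). split; [apply ctx_acEq; auto|].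
  split; [apply Hh; auto| apply acEq_refl].
Qed.

Lemma okt_sub t u : okt E t -> subterm E u t -> okt E u.
Proof.
  intros [Hw [Hg Hn]] Hs. split; [|split].
  - intros s Hs'. apply Hw. eapply sub_trans; eauto.
  - intros x Hx. apply (Hg x). eapply sub_trans; eauto.
  - eapply normal_sub; eauto.
Qed.

Lemma normal_acEq t u : normal E t -> acEq E t u -> normal E u.
Proof.
  intros Hn Ha [w [s' [t' [H1 [H2 H3]]]]]. apply Hn.
  exists w, s', t'; split; [eapply acEq_trans; eauto|auto].
Qed.

Lemma deriv_ok b G T : deriv E b G T -> seq_ok E G T.
Proof. destruct 1; auto. Qed.

End S.

Section S2.
Variable E : eqth.
Notation F := (sym E).
Notation term := (term F).
Notation ctx := (ctx E).

Definition tag (t : term) : nat * nat :=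
  match t with Var x => (0,x) | Name a => (1,a) | Pub _ => (2,0) | Sign _ _ => (3,0)
  | Blind _ _ => (4,0) | Pair _ _ => (5,0) | Enc _ _ => (6,0) | Fn _ _ => (7,0) end.
Definition args (t : term) : list term :=
  match t with Pub a => [a] | Sign a b | Blind a b | Pair a b | Enc a b => [a;b] | _ => [] end.

Lemma guarded_tag s t : tag s = tag t -> guarded E s -> guarded E t.
Proof. destruct s, t; simpl; intros H; inversion H; auto. Qed.

Lemma F2_sym (l1 l2 : list term) : Forall2 (acEq E) l1 l2 -> Forall2 (acEq E) l2 l1.
Proof. induction 1; constructor; auto. apply acEq_sym; auto. Qed.
Lemma F2_trans (l1 l2 l3 : list term) : Forall2 (acEq E) l1 l2 -> Forall2 (acEq E) l2 l3 ->
  Forall2 (acEq E) l1 l3.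
Proof.
  intros H; revert l3; induction H; intros l3 H'; inversion H'; subst; constructor; auto.
  eapply acEq_trans; eauto.
Qed.

Lemma F2_refl (l : list term) : Forall2 (acEq E) l l.
Proof. induction l; constructor; auto. apply acEq_refl. Qed.

Lemma tag_acEq s t : acEq E s t -> tag s = tag t /\ (guarded E s -> Forall2 (acEq E) (args s) (args t)).
Proof.
  induction 1.
  - destruct H; [destruct H; simpl; split; auto; intros []|..];
    (simpl; split; auto; intros _;
       repeat (apply Forall2_cons; [first [apply acEq_refl | apply rst_step; auto]|]);
       apply Forall2_nil).
  - split; auto. intros; apply F2_refl.
  - destruct IHclos_refl_sym_trans as [H1 H2]; split; auto.
    intros Hg. apply F2_sym, H2.
    symmetry in H1; eapply guarded_tag; eauto.
  - destruct IHclos_refl_sym_trans1 as [H1 H2], IHclos_refl_sym_trans2 as [H3 H4].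
    split; [congruence|]. intros Hg. eapply F2_trans; eauto.
    apply H4. eapply guarded_tag; eauto.
Qed.

Ltac cc_tac2 := solve [ apply cc_pub; auto | apply cc_sign1; auto | apply cc_sign2; auto
  | apply cc_blind1; auto | apply cc_blind2; auto | apply cc_pair1; auto | apply cc_pair2; auto
  | apply cc_enc1; auto | apply cc_enc2; auto | apply cc_fn; auto ].
Ltac st_tac2 := solve [ apply st_refl | apply st_pub; eauto | apply st_sign1; eauto | apply st_sign2; eauto
  | apply st_blind1; eauto | apply st_blind2; eauto | apply st_pair1; eauto | apply st_pair2; eauto
  | apply st_enc1; eauto | apply st_enc2; eauto ].

Lemma gs1 (R : term -> term -> Prop)
  (HR : forall s t A, R s t -> guarded E A -> subterm E A s -> subterm E A t) :
  forall s t, cc E R s t -> forall A, subterm E A s -> guarded E A ->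
  exists A', subterm E A' t /\ clos_refl_sym_trans term (cc E R) A A'.
Proof.
  induction 1; intros A Hs Hg;
  [exists A; split; [eapply HR; eauto | apply rst_refl]|..].
  all: try (inversion Hs; subst; first [ (eexists; split; [apply st_refl | apply rst_step; cc_tac2])
     | (edestruct IHcc as [A' [HA1 HA2]]; [eassumption|assumption|]; exists A'; split; [st_tac2|exact HA2])
     | (exists A; split; [st_tac2|apply rst_refl]) ]; fail).
  inversion Hs; subst; [destruct Hg|].
  match goal with Hin : In _ (_ ++ _ :: _) |- _ => apply in_app_or in Hin as [Hi|[Heq|Hi]] end;
  [|subst|].
  - exists A; split; [|apply rst_refl]. eapply st_fn; eauto. apply in_or_app; auto.
  - edestruct IHcc as [A' [HA1 HA2]]; [eassumption|assumption|]. exists A'; split; auto.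
    eapply st_fn; eauto. apply in_or_app; simpl; auto.
  - exists A; split; [|apply rst_refl]. eapply st_fn; eauto. apply in_or_app; simpl; auto.
Qed.

Lemma sub_fn_inv A f ts : subterm E A (Fn f ts) -> guarded E A -> exists u, In u ts /\ subterm E A u.
Proof. intros H Hg; inversion H; subst; [destruct Hg|eauto]. Qed.

Lemma ac_fwd s t A : ac_ax E s t -> guarded E A -> subterm E A s -> subterm E A t.
Proof.
  intros H Hg Hs; destruct H.
  - apply sub_fn_inv in Hs as [u [Hu Hs]]; auto. simpl in Hu.
    destruct Hu as [<-|[<-|[]]].
    + apply sub_fn_inv in Hs as [u [Hu Hs]]; auto. simpl in Hu.
      destruct Hu as [<-|[<-|[]]].
      * eapply st_fn; [simpl; left; reflexivity|auto].
      * eapply st_fn; [simpl; right; left; reflexivity|]. eapply st_fn; [simpl; left; reflexivity|auto].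
    + eapply st_fn; [simpl; right; left; reflexivity|]. eapply st_fn; [simpl; right; left; reflexivity|auto].
  - apply sub_fn_inv in Hs as [u [Hu Hs]]; auto. simpl in Hu.
    destruct Hu as [<-|[<-|[]]]; (match goal with Hs0: subterm _ _ ?u |- _ => apply st_fn with (t:=u) end; [simpl; intuition|eauto]).
Qed.

Lemma ac_bwd s t A : ac_ax E s t -> guarded E A -> subterm E A t -> subterm E A s.
Proof.
  intros H Hg Hs; destruct H.
  - apply sub_fn_inv in Hs as [u [Hu Hs]]; auto. simpl in Hu.
    destruct Hu as [<-|[<-|[]]].
    + eapply st_fn; [simpl; left; reflexivity|]. eapply st_fn; [simpl; left; reflexivity|auto].
    + apply sub_fn_inv in Hs as [u [Hu Hs]]; auto. simpl in Hu.
      destruct Hu as [<-|[<-|[]]].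
      * eapply st_fn; [simpl; left; reflexivity|]. eapply st_fn; [simpl; right; left; reflexivity|auto].
      * eapply st_fn; [simpl; right; left; reflexivity|auto].
  - apply sub_fn_inv in Hs as [u [Hu Hs]]; auto. simpl in Hu.
    destruct Hu as [<-|[<-|[]]]; (match goal with Hs0: subterm _ _ ?u |- _ => apply st_fn with (t:=u) end; [simpl; intuition|eauto]).
Qed.

Lemma cc_flip (R : term -> term -> Prop) s t : cc E R s t -> cc E (fun a b => R b a) t s.
Proof. induction 1; [apply cc_base; auto|cc_tac2..]. Qed.

Lemma rst_flip (R : term -> term -> Prop) x y : clos_refl_sym_trans term R x y ->
  clos_refl_sym_trans term (fun a b => R b a) x y.
Proof.
  induction 1; [apply rst_sym, rst_step; auto|apply rst_refl|apply rst_sym; auto|eapply rst_trans; eauto].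
Qed.

Lemma gs_ac t t' : acEq E t t' -> forall A, subterm E A t -> guarded E A ->
  exists A', subterm E A' t' /\ acEq E A A'.
Proof.
  intros H.
  cut ((forall A, subterm E A t -> guarded E A -> exists A', subterm E A' t' /\ acEq E A A') /\
       (forall A, subterm E A t' -> guarded E A -> exists A', subterm E A' t /\ acEq E A A')).
  { intros [H1 _]; exact H1. }
  induction H.
  - split.
    + apply gs1; auto. intros; eapply ac_fwd; eauto.
    + intros A Hs Hg. apply cc_flip in H.
      destruct (gs1 (fun a b => ac_ax E b a)) with (3 := Hs) (2 := H) as [A' [H1 H2]]; auto.
      { intros; eapply ac_bwd; eauto. }
      exists A'; split; auto.
      apply (rst_map E _ (fun a b => cc E (ac_ax E) b a) (fun z => z)) in H2.
      * apply rst_flip in H2. exact H2.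
      * intros a b Hab. apply cc_flip in Hab. exact Hab.
  - split; intros A Hs Hg; exists A; split; auto; apply acEq_refl.
  - destruct IHclos_refl_sym_trans; split; auto.
  - destruct IHclos_refl_sym_trans1 as [H1 H2], IHclos_refl_sym_trans2 as [H3 H4]; split.
    + intros A Hs Hg. destruct (H1 A Hs Hg) as [A1 [Hs1 Ha1]].
      destruct (H3 A1 Hs1) as [A2 [Hs2 Ha2]].
      { eapply guarded_tag; [apply tag_acEq; eauto|auto]. }
      exists A2; split; auto. eapply acEq_trans; eauto.
    + intros A Hs Hg. destruct (H4 A Hs Hg) as [A1 [Hs1 Ha1]].
      destruct (H2 A1 Hs1) as [A2 [Hs2 Ha2]].
      { eapply guarded_tag; [apply tag_acEq; eauto|auto]. }
      exists A2; split; auto. eapply acEq_trans; eauto.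
Qed.
End S2.

Section S3.
Variable E : eqth.
Notation F := (sym E).
Notation term := (term F).
Notation ctx := (ctx E).
Fixpoint goL (l : list ctx) (ms0 : list term) : list term * list term :=
  match l with
  | [] => ([], ms0)
  | c' :: l' => let (t, ms1) := fill_aux c' ms0 in
                let (ts, ms2) := goL l' ms1 in (t :: ts, ms2)
  end.
Fixpoint sumh (l : list ctx) : nat := match l with [] => 0 | c :: l' => nholes c + sumh l' end.
Fixpoint allwf (l : list ctx) : Prop := match l with [] => True | c :: l' => ctx_wf c /\ allwf l' end.
Lemma fa_cfn f cs ms : fill_aux (CFn f cs) ms = (Fn f (fst (goL cs ms)), snd (goL cs ms)).
Proof. reflexivity. Qed.
Lemma nh_cfn f cs : nholes (CFn f cs) = sumh cs. Proof. reflexivity. Qed.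
Lemma wf_cfn f cs : ctx_wf (CFn f cs) = (length cs = arity E f /\ allwf cs). Proof. reflexivity. Qed.

Fixpoint ctx_ind2 (P : ctx -> Prop) (Hh : P (Hole E))
  (Hf : forall f cs, Forall P cs -> P (CFn f cs)) (c : ctx) : P c :=
  match c with
  | Hole _ => Hh
  | CFn f cs => Hf f cs ((fix go (l : list ctx) : Forall P l :=
      match l with [] => Forall_nil _ | c' :: l' => Forall_cons _ (ctx_ind2 P Hh Hf c') (go l') end) cs)
  end.

Lemma split_len (ms : list term) n : n <= length ms ->
  exists m1 m2, ms = m1 ++ m2 /\ length m1 = n.
Proof.
  intros H; exists (firstn n ms), (skipn n ms); split; [symmetry; apply firstn_skipn|].
  apply firstn_length_le; auto.
Qed.

Lemma FA : forall (c : ctx) ms rest, length ms = nholes c ->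
  fill_aux c (ms ++ rest) = (fst (fill_aux c ms), rest).
Proof.
  apply (ctx_ind2 (fun c : ctx => forall ms rest, length ms = nholes c ->
           fill_aux c (ms ++ rest) = (fst (fill_aux c ms), rest))).
  - intros ms rest H. destruct ms as [|m [|m' ms]]; simpl in H; try discriminate. reflexivity.
  - intros f cs Hcs ms rest Hl. rewrite !fa_cfn. rewrite nh_cfn in Hl.
    enough (forall ms, length ms = sumh cs -> goL cs (ms ++ rest) = (fst (goL cs ms), rest)) as HH.
    { rewrite HH; auto. }
    clear ms Hl. induction Hcs as [|c cs Hc Hcs IH]; intros ms Hl.
    + destruct ms; simpl in Hl; try discriminate. reflexivity.
    + simpl in Hl. destruct (split_len ms (nholes c)) as [m1 [m2 [-> Hm1]]]; [lia|].
      rewrite app_length in Hl.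
      simpl. rewrite <- app_assoc, (Hc m1 (m2 ++ rest) Hm1), (Hc m1 m2 Hm1).
      rewrite (IH m2) by lia. destruct (goL cs m2). reflexivity.
Qed.

Lemma fill_hole (m : term) : fill (Hole E) [m] = m. Proof. reflexivity. Qed.
Lemma fill_cfn f cs (ms : list term) : fill (CFn f cs) ms = Fn f (fst (goL cs ms)).
Proof. reflexivity. Qed.

Lemma FILLP (Q Q' : term -> Prop) (HQ : forall m, Q m -> Q' m)
  (HF : forall f ts, length ts = arity E f -> (forall t, In t ts -> Q' t) -> Q' (Fn f ts)) :
  forall (c : ctx), ctx_wf c -> forall ms, length ms = nholes c ->
  (forall m, In m ms -> Q m) -> Q' (fill c ms).
Proof.
  apply (ctx_ind2 (fun c : ctx => ctx_wf c -> forall ms, length ms = nholes c ->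
  (forall m, In m ms -> Q m) -> Q' (fill c ms))).
  - intros _ ms Hl Hm. destruct ms as [|m [|m' ms]]; simpl in Hl; try discriminate.
    rewrite fill_hole. apply HQ, Hm; simpl; auto.
  - intros f cs Hcs Hw ms Hl Hm. rewrite wf_cfn in Hw. destruct Hw as [Hw1 Hw2].
    rewrite nh_cfn in Hl. rewrite fill_cfn.
    enough (forall ms, length ms = sumh cs -> (forall m, In m ms -> Q m) ->
      length (fst (goL cs ms)) = length cs /\ forall t, In t (fst (goL cs ms)) -> Q' t) as HH.
    { destruct (HH ms Hl Hm) as [H1 H2]. apply HF; auto. congruence. }
    clear ms Hl Hm Hw1. induction Hcs as [|c cs Hc Hcs IH]; intros ms Hl Hm.
    + simpl. split; auto. intros t [].
    + simpl in Hl. destruct Hw2 as [Hwc Hw2].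
      destruct (split_len ms (nholes c)) as [m1 [m2 [-> Hm1]]]; [rewrite Hl; lia|].
      rewrite length_app in Hl.
      simpl. rewrite (FA c m1 m2 Hm1).
      destruct (IH Hw2 m2) as [IH1 IH2]; [lia|intros; apply Hm, in_or_app; auto|].
      destruct (goL cs m2) as [ts r] eqn:Hg. simpl in *. split; [congruence|].
      intros t [<-|Ht]; auto.
      apply Hc; auto. intros; apply Hm, in_or_app; auto.
Qed.

Definition Eid (D : list term) (T : term) : Prop :=
  exists C ms, ctx_wf C /\ length ms = nholes C /\ (forall m, In m ms -> In m D) /\ eqE E T (fill C ms).

Lemma Eid_in D m : In m D -> Eid D m.
Proof.
  intros H; exists (Hole E), [m]; simpl; split; auto; split; auto; split.
  - intros m' [<-|[]]; auto.
  - apply rst_refl.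
Qed.

Lemma Eid_eq D s t : Eid D s -> eqE E s t -> Eid D t.
Proof.
  intros [C [ms [H1 [H2 [H3 H4]]]]] H. exists C, ms; repeat split; auto.
  eapply eqE_trans; [apply eqE_sym; eauto|auto].
Qed.

Lemma FC f : forall (pre ts us : list term), Forall2 (eqE E) ts us ->
  eqE E (Fn f (pre ++ ts)) (Fn f (pre ++ us)).
Proof.
  intros pre ts us H; revert pre; induction H; intros pre.
  - apply rst_refl.
  - eapply eqE_trans.
    + apply (ctx_eqE E (fun z => Fn f (pre ++ z :: l))); eauto.
      intros R a b Hab. apply cc_fn; auto.
    + specialize (IHForall2 (pre ++ [y])). rewrite <- !app_assoc in IHForall2. exact IHForall2.
Qed.

Lemma build D : forall ts, (forall t, In t ts -> Eid D t) ->
  exists Ds ms, length Ds = length ts /\ allwf Ds /\ length ms = sumh Ds /\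
    (forall m, In m ms -> In m D) /\ Forall2 (eqE E) ts (fst (goL Ds ms)).
Proof.
  induction ts as [|t ts IH]; intros H.
  - exists [], []; simpl; repeat split; auto. intros m [].
  - destruct (H t) as [C [ms [H1 [H2 [H3 H4]]]]]; [simpl; auto|].
    destruct IH as [Ds [ms' [G1 [G2 [G3 [G4 G5]]]]]]; [intros; apply H; simpl; auto|].
    exists (C :: Ds), (ms ++ ms'); simpl; repeat split; auto.
    + rewrite length_app; lia.
    + intros m Hm; apply in_app_or in Hm as [|]; auto.
    + rewrite (FA C ms ms' H2). destruct (goL Ds ms') as [a b]; simpl in *. constructor; auto.
Qed.

Lemma Eid_fn D f ts : length ts = arity E f -> (forall t, In t ts -> Eid D t) -> Eid D (Fn f ts).
Proof.
  intros Hl H. destruct (build D ts H) as [Ds [ms [G1 [G2 [G3 [G4 G5]]]]]].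
  exists (CFn f Ds), ms. rewrite wf_cfn, nh_cfn, fill_cfn. repeat split; auto.
  - congruence.
  - apply (FC f []); auto.
Qed.

Lemma Eid_fill D (c : ctx) ms : ctx_wf c -> length ms = nholes c ->
  (forall m, In m ms -> Eid D m) -> Eid D (fill c ms).
Proof. intros; eapply (FILLP (Eid D) (Eid D)); eauto. apply Eid_fn. Qed.
End S3.

Section S4.
Variable E : eqth.
Variable HE : valid_theory E.
Notation F := (sym E).
Notation term := (term F).
Notation ctx := (ctx E).
Variable Ms : list term.
Variable HMs : forall m, In m Ms -> okt E m.

Ltac cc_tac4 := solve [ apply cc_pub; auto | apply cc_sign1; auto | apply cc_sign2; auto
  | apply cc_blind1; auto | apply cc_blind2; auto | apply cc_pair1; auto | apply cc_pair2; auto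
  | apply cc_enc1; auto | apply cc_enc2; auto | apply cc_fn; auto ].
Ltac st_tac4 := solve [ apply st_refl | apply st_pub; eauto | apply st_sign1; eauto | apply st_sign2; eauto
  | apply st_blind1; eauto | apply st_blind2; eauto | apply st_pair1; eauto | apply st_pair2; eauto
  | apply st_enc1; eauto | apply st_enc2; eauto | eapply st_fn; eauto ].

Ltac cc_etac := solve [ eapply cc_pub; eauto | eapply cc_sign1; eauto | eapply cc_sign2; eauto
  | eapply cc_blind1; eauto | eapply cc_blind2; eauto | eapply cc_pair1; eauto | eapply cc_pair2; eauto
  | eapply cc_enc1; eauto | eapply cc_enc2; eauto ].

Definition Pinv (t : term) : Prop := forall A, subterm E A t -> guarded E A ->
  exists m A', In m Ms /\ subterm E A' m /\ acEq E A A'.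

Lemma pinv_ac s t : acEq E s t -> Pinv s -> Pinv t.
Proof.
  intros Ha Hp A Hs Hg. apply acEq_sym in Ha.
  destruct (gs_ac E _ _ Ha A Hs Hg) as [A1 [Hs1 Ha1]].
  destruct (Hp A1 Hs1) as [m [A2 [H1 [H2 H3]]]].
  { eapply guarded_tag; [apply tag_acEq; eauto|auto]. }
  exists m, A2; repeat split; auto. eapply acEq_trans; eauto.
Qed.

Lemma contra u v : Pinv u -> guarded E u -> cc E (rule_inst E (rules E)) u v -> False.
Proof.
  intros Hp Hg Hc. destruct (Hp u (st_refl _ _) Hg) as [m [A' [H1 [H2 H3]]]].
  destruct (sub_ctx E _ _ H2) as [h [Hh ->]].
  destruct (HMs _ H1) as [_ [_ Hn]]. apply Hn.
  exists (h v), (h u), (h v); split; [apply ctx_acEq; auto; apply acEq_sym; auto|].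
  split; [apply Hh; auto|apply acEq_refl].
Qed.

Lemma sub_subst sg s l : subterm E s l -> subterm E (subst E sg s) (subst E sg l).
Proof.
  induction 1; simpl; try st_tac4.
  eapply st_fn; [apply in_map; eauto|auto].
Qed.

Lemma pure_sub i r s : pure E i r -> subterm E s r -> pure E i s.
Proof. intros Hp Hs s' Hs'. apply Hp. eapply sub_trans; eauto. Qed.

Lemma subst_pure i sg A u : subterm E A u -> forall r, u = subst E sg r -> pure E i r ->
  guarded E A -> exists x, subterm E (Var x) r /\ subterm E A (sg x).
Proof.
  induction 1; intros r Heq Hp Hg;
  (destruct r as [x| | | | | | |]; simpl in Heq; try discriminate;
   [exists x; split; [apply st_refl|rewrite <- Heq; st_tac4]|..]);
  try (specialize (Hp _ (st_refl _ _)); simpl in Hp; destruct Hp; fail).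
  - subst. destruct Hg.
  - inversion Heq; subst. apply in_map_iff in H as [t0 [<- Ht0]].
    destruct (IHsubterm t0 eq_refl) as [x [Hx1 Hx2]]; auto.
    + eapply pure_sub; eauto. eapply st_fn; eauto. apply st_refl.
    + exists x; split; auto. eapply st_fn; eauto.
Qed.

Lemma RS s t : cc E (rule_inst E (rules E)) s t -> Pinv s -> Pinv t.
Proof.
  induction 1; intros Hp; try (exfalso; eapply contra; [exact Hp|exact I|cc_etac]; fail).
  - destruct H as [l [r [sg [Hr [-> ->]]]]].
    destruct HE as [_ [_ [_ [Hrl _]]]].
    destruct (Hrl l r Hr) as [[i [_ [_ Hpr]]] [_ [_ [_ Hv]]]].
    intros A Hs Hg. destruct (subst_pure i sg A _ Hs r eq_refl Hpr Hg) as [x [Hx1 Hx2]].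
    apply Hp; auto. eapply sub_trans; [exact Hx2|].
    apply (sub_subst sg (Var x) l). auto.
  - intros A Hs Hg. apply sub_fn_inv in Hs as [u [Hu Hs]]; auto.
    apply in_app_or in Hu as [Hu|[<-|Hu]].
    + apply Hp; auto. eapply st_fn; eauto. apply in_or_app; auto.
    + apply IHcc; auto. intros B HB HgB. apply Hp; auto. eapply st_fn; eauto. apply in_or_app; simpl; auto.
    + apply Hp; auto. eapply st_fn; eauto. apply in_or_app; simpl; auto.
Qed.

Lemma INV s t : rstar E (rules E) s t -> Pinv s -> Pinv t.
Proof.
  induction 1; auto.
  destruct H as [s' [t' [H1 [H2 H3]]]]. intros Hp.
  eapply pinv_ac; [exact H3|]. eapply RS; [exact H2|]. eapply pinv_ac; eauto.
Qed.

Lemma pinv_fill (C : ctx) : ctx_wf C -> length Ms = nholes C -> Pinv (fill C Ms).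
Proof.
  intros Hw Hl. apply (FILLP E (fun m => In m Ms) Pinv); auto.
  - intros m Hm A Hs Hg. exists m, A; repeat split; auto. apply acEq_refl.
  - intros f ts _ Hts A Hs Hg. apply sub_fn_inv in Hs as [u [Hu Hs]]; auto.
    eapply Hts; eauto.
Qed.
End S4.

Ltac st_tac5 := solve [ apply st_refl | apply st_pub; eauto | apply st_sign1; eauto | apply st_sign2; eauto
  | apply st_blind1; eauto | apply st_blind2; eauto | apply st_pair1; eauto | apply st_pair2; eauto
  | apply st_enc1; eauto | apply st_enc2; eauto | eapply st_fn; eauto ].
Section S5.
Variable E : eqth.
Notation F := (sym E).
Notation term := (term F).
Notation ctx := (ctx E).

Lemma ac_dec s t : acEq E s t -> guarded E s -> tag E s = tag E t /\ Forall2 (acEq E) (args E s) (args E t).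
Proof. intros H Hg; destruct (tag_acEq E s t H); auto. Qed.

Ltac acdec H :=
  let Hg := fresh in let Ht := fresh in let Hf := fresh in
  apply ac_dec in H as [Ht Hf]; [|exact I];
  match goal with |- _ => idtac end.

Lemma ac_pub a t : acEq E (Pub a) t -> exists x, t = Pub x /\ acEq E a x.
Proof.
  intros H; apply ac_dec in H as [Ht Hf]; [|exact I].
  destruct t; simpl in Ht; try discriminate. inversion Hf; subst; eauto.
Qed.
Lemma ac_sign a b t : acEq E (Sign a b) t -> exists x y, t = Sign x y /\ acEq E a x /\ acEq E b y.
Proof.
  intros H; apply ac_dec in H as [Ht Hf]; [|exact I].
  destruct t; simpl in Ht; try discriminate. inversion Hf as [|? ? ? ? H1 H2]; subst.
  inversion H2; subst; eauto 6.
Qed.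
Lemma ac_blind a b t : acEq E (Blind a b) t -> exists x y, t = Blind x y /\ acEq E a x /\ acEq E b y.
Proof.
  intros H; apply ac_dec in H as [Ht Hf]; [|exact I].
  destruct t; simpl in Ht; try discriminate. inversion Hf as [|? ? ? ? H1 H2]; subst.
  inversion H2; subst; eauto 6.
Qed.
Lemma ac_pair a b t : acEq E (Pair a b) t -> exists x y, t = Pair x y /\ acEq E a x /\ acEq E b y.
Proof.
  intros H; apply ac_dec in H as [Ht Hf]; [|exact I].
  destruct t; simpl in Ht; try discriminate. inversion Hf as [|? ? ? ? H1 H2]; subst.
  inversion H2; subst; eauto 6.
Qed.
Lemma ac_enc a b t : acEq E (Enc a b) t -> exists x y, t = Enc x y /\ acEq E a x /\ acEq E b y.
Proof.
  intros H; apply ac_dec in H as [Ht Hf]; [|exact I].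
  destruct t; simpl in Ht; try discriminate. inversion Hf as [|? ? ? ? H1 H2]; subst.
  inversion H2; subst; eauto 6.
Qed.

Lemma ac_sign_cong a b x y : acEq E a x -> acEq E b y -> acEq E (Sign a b) (Sign x y).
Proof.
  intros H1 H2. eapply acEq_trans.
  - apply (ctx_acEq E (fun z => Sign z b)); [intros R u v Hc; apply cc_sign1; auto|exact H1].
  - apply (ctx_acEq E (fun z => Sign x z)); [intros R u v Hc; apply cc_sign2; auto|exact H2].
Qed.

Lemma okt_sign x y : okt E x -> okt E y -> normal E (Sign x y) -> okt E (Sign x y).
Proof.
  intros [Wx [Gx _]] [Wy [Gy _]] Hn. split; [|split; auto].
  - intros s Hs. inversion Hs; subst; [simpl; auto|apply Wx; auto|apply Wy; auto].
  - intros v Hv. inversion Hv; subst; [eapply Gx|eapply Gy]; eauto.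
Qed.

End S5.

Section S6.
Variable E : eqth.
Notation F := (sym E).
Notation term := (term F).
Notation ctx := (ctx E).
Variable N : term.
Variable Ms : list term.
Variable C : ctx.
Variable HC : ctx_wf C.
Variable HL : length Ms = nholes C.
Variable HN : eqE E N (fill C Ms).
Variable HP : Pinv E Ms N.

Definition Rel (G D : list term) : Prop := forall t, In t G ->
  (exists t', In t' D /\ acEq E t t') \/ (t = N /\ ~ guarded E N /\ forall m, In m Ms -> In m D).

Lemma rel_g G D t : Rel G D -> In t G -> guarded E t -> exists t', In t' D /\ acEq E t t'.
Proof. intros HR Hi Hg. destruct (HR t Hi) as [H|[-> [Hn _]]]; auto. contradiction. Qed.

Lemma rel_cons G D a a' : Rel G D -> acEq E a a' -> Rel (a :: G) (a' :: D).
Proof.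
  intros HR Ha t [<-|Hi].
  - left; exists a'; simpl; auto.
  - destruct (HR t Hi) as [[t' [H1 H2]]|[H1 H2]].
    + left; exists t'; simpl; auto.
    + right; destruct H2; split; auto; split; auto. intros; simpl; auto.
Qed.

Lemma okt_in D t : Forall (okt E) D -> In t D -> okt E t.
Proof. rewrite Forall_forall; auto. Qed.

Ltac seqok := split; auto.

Lemma MAIN : forall G T, deriv E false G T -> forall D T', acEq E T T' -> okt E T' ->
  Forall (okt E) D -> Rel G D -> deriv E false D T'.
Proof.
  induction 1; intros D T' HT HT' HD HR.
  -
    apply r_id; [seqok|]. destruct H0 as [C0 [ms [W [L [Hms Q]]]]].
    assert (Eid E D (fill C0 ms)) as He.
    { apply Eid_fill; auto. intros m Hm. destruct (HR m (Hms m Hm)) as [[t' [G1 G2]]|[-> [_ G2]]].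
      - eapply Eid_eq; [apply Eid_in; eauto|]. apply eqE_sym, acEq_eqE; auto.
      - eapply Eid_eq; [apply Eid_fill; [exact HC|exact HL|intros m' Hm'; apply Eid_in; auto]|]. apply eqE_sym; auto. }
    eapply Eid_eq; [exact He|]. eapply eqE_trans; [apply eqE_sym; exact Q|]. apply acEq_eqE; auto.
  - discriminate.
  -
    destruct (rel_g _ _ _ HR H0 I) as [t' [Hi Ha]]. apply ac_pair in Ha as [x [y [-> [Hx Hy]]]].
    assert (Ho := okt_in _ _ HD Hi).
    apply r_pL with x y; [seqok|auto|].
    apply IHderiv; auto.
    + constructor; [eapply okt_sub; [exact Ho|apply st_pair1, st_refl]|].
      constructor; [eapply okt_sub; [exact Ho|apply st_pair2, st_refl]|auto].
    + apply rel_cons; auto. apply rel_cons; auto.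
  -
    apply ac_pair in HT as [x [y [-> [Hx Hy]]]].
    apply r_pR; [seqok| apply IHderiv1 | apply IHderiv2]; auto;
    eapply okt_sub; eauto; [apply st_pair1, st_refl|apply st_pair2, st_refl].
  -
    destruct (rel_g _ _ _ HR H0 I) as [t' [Hi Ha]]. apply ac_enc in Ha as [x [y [-> [Hx Hy]]]].
    assert (Ho := okt_in _ _ HD Hi).
    assert (okt E x) by (eapply okt_sub; [exact Ho|apply st_enc1, st_refl]).
    assert (okt E y) by (eapply okt_sub; [exact Ho|apply st_enc2, st_refl]).
    apply r_eL with x y; [seqok|auto| |].
    + apply IHderiv1; auto.
    + apply IHderiv2; auto. apply rel_cons; auto. apply rel_cons; auto.
  -
    apply ac_enc in HT as [x [y [-> [Hx Hy]]]].
    apply r_eR; [seqok| apply IHderiv1 | apply IHderiv2]; auto;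
    eapply okt_sub; eauto; [apply st_enc1, st_refl|apply st_enc2, st_refl].
  -
    destruct (rel_g _ _ _ HR H0 I) as [t' [Hi Ha]]. apply ac_sign in Ha as [x [y [-> [Hx Hy]]]].
    destruct (rel_g _ _ _ HR H1 I) as [t2 [Hi2 Ha2]]. apply ac_pub in Ha2 as [z [-> Hz]].
    assert (Ho := okt_in _ _ HD Hi).
    apply r_signL with x y z; [seqok|auto|auto| |].
    + eapply acEq_trans; [apply acEq_sym; exact Hy|]. eapply acEq_trans; [exact H2|exact Hz].
    + apply IHderiv; auto.
      * constructor; auto. eapply okt_sub; [exact Ho|apply st_sign1, st_refl].
      * apply rel_cons; auto.
  -
    apply ac_sign in HT as [x [y [-> [Hx Hy]]]].
    apply r_signR; [seqok| apply IHderiv1 | apply IHderiv2]; auto;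
    eapply okt_sub; eauto; [apply st_sign1, st_refl|apply st_sign2, st_refl].
  -
    destruct (rel_g _ _ _ HR H0 I) as [t' [Hi Ha]]. apply ac_blind in Ha as [x [y [-> [Hx Hy]]]].
    assert (Ho := okt_in _ _ HD Hi).
    assert (okt E x) by (eapply okt_sub; [exact Ho|apply st_blind1, st_refl]).
    assert (okt E y) by (eapply okt_sub; [exact Ho|apply st_blind2, st_refl]).
    apply r_blindL1 with x y; [seqok|auto| |].
    + apply IHderiv1; auto.
    + apply IHderiv2; auto. apply rel_cons; auto. apply rel_cons; auto.
  -
    apply ac_blind in HT as [x [y [-> [Hx Hy]]]].
    apply r_blindR; [seqok| apply IHderiv1 | apply IHderiv2]; auto;
    eapply okt_sub; eauto; [apply st_blind1, st_refl|apply st_blind2, st_refl].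
  -
    destruct (rel_g _ _ _ HR H0 I) as [t' [Hi Ha]]. apply ac_sign in Ha as [b [y [-> [Hb Hy]]]].
    apply ac_blind in Hb as [x [z [-> [Hx Hz]]]].
    assert (Ho := okt_in _ _ HD Hi).
    assert (okt E x) by (eapply okt_sub; [exact Ho|apply st_sign1, st_blind1, st_refl]).
    assert (okt E z) by (eapply okt_sub; [exact Ho|apply st_sign1, st_blind2, st_refl]).
    assert (okt E y) by (eapply okt_sub; [exact Ho|apply st_sign2, st_refl]).
    apply r_blindL2 with x z y; [seqok|auto| |].
    + apply IHderiv1; auto.
    + assert (Hs : acEq E (Sign M K) (Sign x y)) by (apply ac_sign_cong; auto).
      apply IHderiv2; auto.
      * destruct (deriv_ok E _ _ _ H2) as [Hf _]. inversion Hf as [|? ? Hok]; subst.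
        constructor; [|constructor; auto].
        apply okt_sign; auto. eapply normal_acEq; [apply Hok|exact Hs].
      * apply rel_cons; auto. apply rel_cons; auto.
  -
    destruct H1 as [t [Ht Hs]].
    assert (exists A' t'', (In t'' D \/ t'' = T') /\ subterm E A' t'' /\ acEq E A A') as HA.
    { destruct Ht as [Ht| ->].
      - destruct (HR t Ht) as [[t' [G1 G2]]|[-> [_ G2]]].
        + destruct (gs_ac E _ _ G2 A Hs H0) as [A' [Hs' Ha']]. exists A', t'; split; [left; auto|auto].
        + destruct (HP A Hs H0) as [m [A' [K3 [K4 K5]]]]. exists A', m; split; [left; auto|auto].
      - destruct (gs_ac E _ _ HT A Hs H0) as [A' [Hs' Ha']]. exists A', T'; split; [right; auto|auto]. }
    destruct HA as [A' [t'' [Ht'' [HsA HaA]]]].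
    assert (okt E A').
    { eapply okt_sub; [|exact HsA]. destruct Ht'' as [Hi| ->]; auto. eapply okt_in; eauto. }
    apply r_gs with A'; [seqok| |eauto| |].
    + eapply guarded_tag; [apply tag_acEq; eauto|auto].
    + apply IHderiv1; auto.
    + apply IHderiv2; auto. apply rel_cons; auto.
Qed.
End S6.


Theorem lemma4 (E : eqth) (HE : valid_theory E)
  (G : list (term (sym E))) (Ms : list (term (sym E))) (C : ctx E)
  (M N : term (sym E)) :
  ctx_wf C -> length Ms = nholes C ->
  (forall m, In m Ms -> okt E m) ->
  is_nf E (fill C Ms) N ->
  cutfree E (N :: G) M ->
  cutfree E (Ms ++ G) M.
Proof.
  intros HC HL HMs [Hr Hn] Hd. unfold cutfree in *.
  assert (HN : eqE E N (fill C Ms)) by (apply eqE_sym, rstar_eqE; auto).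
  assert (HP : Pinv E Ms N) by (eapply INV; eauto; apply pinv_fill; auto).
  destruct (deriv_ok E _ _ _ Hd) as [HF HM].
  inversion HF as [|? ? HoN HG]; subst.
  assert (HD : Forall (okt E) (Ms ++ G)).
  { apply Forall_app; split; auto. apply Forall_forall; auto. }
  assert (Hdec : guarded E N \/ ~ guarded E N) by (destruct N; simpl; tauto).
  destruct Hdec as [Hg|Hg].
  - destruct (HP N (st_refl _ _) Hg) as [m [A' [Hm [Hs Ha]]]].
    assert (HoA : okt E A') by (eapply okt_sub; [apply HMs; exact Hm|exact Hs]).
    apply r_gs with A'.
    + split; auto.
    + eapply guarded_tag; [apply tag_acEq; eauto|auto].
    + exists m; split; auto. left; apply in_or_app; auto.
    + apply r_id; [split; auto|]. exists C, Ms; repeat split; auto.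
      * intros; apply in_or_app; auto.
      * eapply eqE_trans; [apply eqE_sym, acEq_eqE; exact Ha|exact HN].
    + eapply (MAIN E N Ms C HC HL HN HP); [exact Hd|apply acEq_refl|auto|constructor; auto|].
      intros t [<-|Ht].
      * left; exists A'; simpl; auto.
      * left; exists t; split; [simpl; right; apply in_or_app; auto|apply acEq_refl].
  - eapply (MAIN E N Ms C HC HL HN HP); [exact Hd|apply acEq_refl|auto|auto|].
    intros t [<-|Ht].
    + right; split; auto; split; auto. intros; apply in_or_app; auto.
    + left; exists t; split; [apply in_or_app; auto|apply acEq_refl].
Qed.
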